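(* Let $\ell\ge1$ and let $\mathbf{s},\mathbf{p}\in\mathbb{Z}^{\ell+1}$ be column vectors with $\mathbf{s}_{\ell+1}=1$. Set $d:=\mathbf{s}^T\mathbf{p}$ and assume $d\neq0$; let $\gamma$ be the gcd of the entries of $\mathbf{p}$. Then the matrix $L:=dI_{\ell+1}-\mathbf{p}\mathbf{s}^T$ has cokernel $$\mathbb{Z}^{\ell+1}/\mathrm{im}\,L\cong\mathbb{Z}\oplus\mathbb{Z}/\gamma\mathbb{Z}\oplus(\mathbb{Z}/d\mathbb{Z})^{\ell-1}.$$ *)

(* Defs.v *)
From HB Require Import structures.
From mathcomp Require Import all_boot all_order all_algebra.
Set Implicit Arguments. Unset Strict Implicit. Unset Printing Implicit Defensive.
Import Order.TTheory GRing.Theory Num.Theory.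
Local Open Scope ring_scope.

Definition in_im (n : nat) (A : 'M[int]_n) (x : 'cV[int]_n) : Prop :=
  exists z : 'cV[int]_n, x = A *m z.

(* coker_iso A B : Z^n / im A  is isomorphic (as abelian group) to Z^n / im B.
   Written out: there is a group homomorphism f : Z^n -> Z^n such that the
   induced map Z^n -> Z^n / im B is surjective with kernel exactly im A
   (first isomorphism theorem; every hom from the free group Z^n into
   Z^n / im B lifts to Z^n). *)
Definition coker_iso (n : nat) (A B : 'M[int]_n) : Prop :=
  exists f : 'cV[int]_n -> 'cV[int]_n,
    [/\ (forall x y, f (x + y) = f x + f y),
        (forall y, exists x, in_im B (f x - y)) &
        (forall x, in_im B (f x) <-> in_im A x)].

(* The diagonal matrix diag(0, g, d, ..., d) of size l+1 (l >= 1); its cokernel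
   is Z (+) Z/gZ (+) (Z/dZ)^(l-1). *)
Definition target_diag (l : nat) (g d : int) : 'M[int]_l.+1 :=
  \matrix_(i, j) (if i == j then
                    (if nat_of_ord i == 0%N then 0
                     else if nat_of_ord i == 1%N then g else d)
                  else 0).

Definition gcd_entries (n : nat) (p : 'cV[int]_n) : int :=
  \big[gcdz/0]_(i < n) p i 0.

(* Main.v *)
Require Import Defs.
From HB Require Import structures.
From mathcomp Require Import all_boot all_order all_algebra.
From mathcomp Require Import ring lra zify.
Import Order.TTheory GRing.Theory Num.Theory.
Local Open Scope ring_scope.
Set Implicit Arguments. Unset Strict Implicit. Unset Printing Implicit Defensive.

Lemma Lz_eq n (s p z : 'cV[int]_n) (d : int) :
  (d%:M - p *m s^T) *m z = d *: z - (s^T *m z) 0 0 *: p.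
Proof.
by rewrite mulmxBl mul_scalar_mx -mulmxA {1}[s^T *m z]mx11_scalar mul_mx_scalar.
Qed.

Lemma mxZE m n (a : int) (A : 'M[int]_(m,n)) i j : (a *: A) i j = a * A i j.
Proof. by rewrite mxE. Qed.
Lemma mxBE m n (A B : 'M[int]_(m,n)) i j : (A - B) i j = A i j - B i j.
Proof. by rewrite !mxE. Qed.
Lemma mxDE m n (A B : 'M[int]_(m,n)) i j : (A + B) i j = A i j + B i j.
Proof. by rewrite !mxE. Qed.

Lemma imL_char n (s p x : 'cV[int]_n) :
  (s^T *m p) 0 0 != 0 ->
  in_im (((s^T *m p) 0 0)%:M - p *m s^T) x <->
  ((s^T *m x) 0 0 = 0 /\
   exists (w : 'cV[int]_n) (k : int), x = (s^T *m p) 0 0 *: w + k *: p).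
Proof.
set d := (s^T *m p) 0 0 => dn0; split.
- case=> z ->; rewrite Lz_eq; split; last first.
    by exists z, (- (s^T *m z) 0 0); rewrite scaleNr.
  by rewrite mulmxBr -!scalemxAr mxBE !mxZE -/d mulrC subrr.
- case=> sx [w [k Dx]]; exists w; rewrite Lz_eq Dx; congr (_ + _).
  rewrite -scaleNr; congr (_ *: _).
  move: sx; rewrite Dx mulmxDr -!scalemxAr mxDE !mxZE -/d => sx.
  have : (k + (s^T *m w) 0 0) * d == 0 by apply/eqP; rewrite -[RHS]sx; ring.
  by rewrite mulf_eq0 (negbTE dn0) orbF addr_eq0 => /eqP.
Qed.

Lemma Tz l g d (z : 'cV[int]_l.+1) i :
  (target_diag l g d *m z) i 0 = target_diag l g d i i * z i 0.
Proof.
rewrite mxE (bigD1 i) //= big1 ?addr0 // => k /negbTE ki.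
by rewrite [target_diag _ _ _ i k]mxE eq_sym ki mul0r.
Qed.

Lemma imT_char l g d (y : 'cV[int]_l.+1) :
  in_im (target_diag l g d) y <-> forall i, (target_diag l g d i i %| y i ord0)%Z.
Proof.
split.
  by case=> z -> i; rewrite Tz; apply: dvdz_mulr.
move=> H; exists (\col_i (if target_diag l g d i i == 0 then 0
                          else divz (y i 0) (target_diag l g d i i))).
apply/colP => i; rewrite Tz [X in _ * X]mxE.
have := H i; case: eqP => [->|_]; first by rewrite dvd0z mul0r => /eqP.
by move/divzK => E; rewrite mulrC E.
Qed.

Definition cut l (x : 'cV[int]_l.+1) : 'cV[int]_l := \col_j x (lift ord_max j) 0.

Lemma sum_recr l (F : 'I_l.+1 -> int) :
  \sum_(i < l.+1) F i = \sum_(j < l) F (lift ord_max j) + F ord_max.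
Proof.
rewrite big_ord_recr; congr (_ + _); apply: eq_bigr => j _; congr F.
by apply/ord_inj; rewrite lift_max.
Qed.

Lemma dotE l (s x : 'cV[int]_l.+1) :
  (s^T *m x) 0 0 = \sum_(j < l) cut s j 0 * cut x j 0 + s ord_max 0 * x ord_max 0.
Proof.
rewrite mxE sum_recr; congr (_ + _); first apply: eq_bigr => j _.
all: by rewrite !mxE.
Qed.

Lemma K2 l (s p x : 'cV[int]_l.+1) : s ord_max 0 = 1 -> (s^T *m x) 0 0 = 0 ->
  (exists (w : 'cV[int]_l.+1) (k : int), x = (s^T *m p) 0 0 *: w + k *: p) <->
  (exists (w : 'cV[int]_l) (k : int), cut x = (s^T *m p) 0 0 *: w + k *: cut p).
Proof.
set d := (s^T *m p) 0 0 => s1 sx; split.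
  case=> w [k Dx]; exists (cut w), k; apply/colP => j.
  by rewrite !mxE Dx !mxE.
case=> w [k Dx].
exists (\col_i (if unlift ord_max i is Some j then w j 0
               else - (\sum_j cut s j 0 * w j 0) - k)), k.
apply/colP => i; rewrite mxDE !mxZE mxE.
case: (unliftP ord_max i) => [j ->|->].
  by move/colP: Dx => /(_ j); rewrite !mxE.
have dE : d = \sum_(j < l) cut s j 0 * cut p j 0 + p ord_max 0.
  by rewrite /d dotE s1 mul1r.
move: sx; rewrite dotE s1 mul1r => /eqP; rewrite addrC addr_eq0 => /eqP ->.
have -> : \sum_(j < l) cut s j 0 * cut x j 0 =
          d * (\sum_j cut s j 0 * w j 0) + k * (\sum_j cut s j 0 * cut p j 0).
  rewrite !mulr_sumr -big_split; apply: eq_bigr => j _ /=.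
  rewrite Dx mxDE !mxZE; ring.
rewrite dE; ring.
Qed.

Lemma K3 l (Lm W : 'M[int]_l) (p' v0 u : 'cV[int]_l) (d : int) :
  W *m Lm = 1%:M -> Lm *m W = 1%:M -> p' = Lm *m v0 ->
  (exists (w : 'cV[int]_l) (k : int), u = d *: w + k *: p') <->
  (exists (w : 'cV[int]_l) (k : int), W *m u = d *: w + k *: v0).
Proof.
move=> WL LW ->; split.
  case=> w [k ->]; exists (W *m w), k.
  by rewrite mulmxDr -!scalemxAr mulmxA WL mul1mx.
case=> w [k Du]; exists (Lm *m w), k.
by rewrite -[u]mul1mx -LW -mulmxA Du mulmxDr -!scalemxAr.
Qed.

Lemma K4 l (v0 u : 'cV[int]_l.+1) (a d : int) :
  (forall j, v0 j 0 = if j == ord0 then a else 0) ->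
  (exists (w : 'cV[int]_l.+1) (k : int), u = d *: w + k *: v0) <->
  ((gcdz a d %| u ord0 ord0)%Z /\ forall j, j != ord0 -> (d %| u j ord0)%Z).
Proof.
move=> v0E; split.
  case=> w [k ->]; split.
    rewrite mxDE !mxZE v0E eqxx; apply: rpredD.
      by apply: dvdz_mulr; apply: dvdz_gcdr.
    by apply: dvdz_mull; apply: dvdz_gcdl.
  by move=> j /negbTE jn0; rewrite mxDE !mxZE v0E jn0 mulr0 addr0; apply: dvdz_mulr.
case=> /dvdzP [q Dq] Hj.
have [x [y Bxy]] := Bezoutz a d.
exists (\col_j (if j == ord0 then q * y else divz (u j ord0) d)), (q * x).
apply/colP => j; rewrite mxDE !mxZE v0E mxE.
case: eqP => [->|/eqP jn0].
  by rewrite Dq -Bxy; ring.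
by rewrite mulr0 addr0 mulrC divzK // Hj.
Qed.

Lemma dvd_bigg n (F : 'I_n -> int) x :
  (x %| \big[gcdz/0]_(i < n) F i)%Z <-> forall i, (x %| F i)%Z.
Proof.
elim: n F => [|n IH] F.
  by rewrite big_ord0; split => // _ [].
rewrite big_ord_recl dvdz_gcd; split.
  case/andP=> H0 /IH H i; case: (unliftP ord0 i) => [j ->|->] //.
by move=> H; rewrite H /=; apply/IH => j.
Qed.

Lemma bigg_ge0 n (F : 'I_n -> int) : 0 <= \big[gcdz/0]_(i < n) F i.
Proof. by elim/big_rec: _ => // i y _ _. Qed.

Lemma dvd_eq_nonneg (a b : int) : 0 <= a -> 0 <= b ->
  (forall x, (x %| a)%Z <-> (x %| b)%Z) -> a = b.
Proof.
case: a => // m; case: b => // n _ _ H.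
have h1 : (Posz m %| Posz n)%Z by apply/H.
have h2 : (Posz n %| Posz m)%Z by apply/H.
by congr Posz; apply/eqP; rewrite eqn_dvd; apply/andP; split.
Qed.

Lemma K6 l (s p : 'cV[int]_l.+1) (Lm W : 'M[int]_l) (v0 : 'cV[int]_l) a (i0 : 'I_l) :
  s ord_max 0 = 1 -> W *m Lm = 1%:M -> cut p = Lm *m v0 ->
  (forall j, v0 j 0 = if j == i0 then a else 0) ->
  gcdz a ((s^T *m p) 0 0) = gcd_entries p.
Proof.
move=> s1 WL Dp v0E; apply: dvd_eq_nonneg => //; first exact: bigg_ge0.
move=> x; rewrite dvdz_gcd /gcd_entries dvd_bigg.
have Ha : (x %| a)%Z <-> forall j, (x %| cut p j ord0)%Z.
  split.
    move=> xa j; rewrite Dp mxE; apply: rpred_sum => k _.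
    by rewrite v0E; case: eqP => _; [apply: dvdz_mull | rewrite mulr0 dvdz0].
  move=> H; have -> : a = (W *m cut p) i0 ord0 by rewrite Dp mulmxA WL mul1mx v0E eqxx.
  by rewrite mxE; apply: rpred_sum => k _; apply: dvdz_mull.
rewrite dotE s1 mul1r; split.
  case/andP=> /Ha H1 H2 i; case: (unliftP ord_max i) => [j ->|->].
    by have := H1 j; rewrite mxE.
  move: H2; rewrite rpredDl //.
  by apply: rpred_sum => j _; apply: dvdz_mull.
move=> H.
have H1 : forall j, (x %| cut p j ord0)%Z by move=> j; rewrite mxE.
apply/andP; split; first exact/Ha.
by apply: rpredD => //; apply: rpred_sum => j _; apply: dvdz_mull.
Qed.

Unset Implicit Arguments.

Theorem lemma4p2 (l : nat) (s p : 'cV[int]_l.+1) :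
  (1 <= l)%N ->
  s ord_max 0 = 1 ->
  (s^T *m p) 0 0 != 0 ->
  coker_iso (((s^T *m p) 0 0)%:M - p *m s^T)
            (target_diag l (gcd_entries p) ((s^T *m p) 0 0)).
Proof.
case: l s p => [//|l] s p _ s1 dn0.
set d := (s^T *m p) 0 0.
have [Lm uLm [R uR [ds _ Dp]]] := int_Smith_normal_form (cut p).
set D := \matrix_(i, j) _ in Dp.
set v0 := D *m R.
set a := ds`_0 * R 0 0.
have Dp' : cut p = Lm *m v0 by rewrite Dp mulmxA.
have v0E : forall j, v0 j 0 = if j == ord0 then a else 0.
  move=> j; rewrite mxE big_ord1 mxE.
  case: (eqVneq j ord0) => [->|jn0]; first by rewrite mulr1n.
  have -> : (nat_of_ord j == 0%N) = false.
    by apply/negbTE; apply: contra jn0 => /eqP h; apply/eqP/ord_inj.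
  by rewrite mulr0n mul0r.
set W := invmx Lm.
have WL : W *m Lm = 1%:M by rewrite mulVmx.
have LW : Lm *m W = 1%:M by rewrite mulmxV.
have gE : gcdz a d = gcd_entries p := K6 s1 WL Dp' v0E.
pose f (x : 'cV[int]_l.+2) : 'cV[int]_l.+2 :=
  \col_i (if unlift ord0 i is Some j then (W *m cut x) j 0 else (s^T *m x) 0 0).
have fE : forall x i, f x i 0 =
    (if unlift ord0 i is Some j then (W *m cut x) j 0 else (s^T *m x) 0 0).
  by move=> x i; rewrite mxE.
have cutD : forall x y : 'cV[int]_l.+2, cut (x + y) = cut x + cut y.
  by move=> x y; apply/colP => i; rewrite !mxE.
exists f; split.
- move=> x y; apply/colP => i; rewrite mxDE !fE.
  case: (unlift ord0 i) => [j|]; first by rewrite cutD mulmxDr [LHS]mxE.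
  by rewrite mulmxDr [LHS]mxE.
- move=> y; pose yc : 'cV[int]_l.+1 := \col_j y (lift ord0 j) 0.
  pose x : 'cV[int]_l.+2 := \col_i (if unlift ord_max i is Some j then (Lm *m yc) j 0
         else y ord0 0 - \sum_j cut s j 0 * (Lm *m yc) j 0).
  have cx : cut x = Lm *m yc by apply/colP => j; rewrite [LHS]mxE [LHS]mxE liftK.
  exists x; have -> : f x = y.
    apply/colP => i; rewrite fE; case: (unliftP ord0 i) => [j ->|->].
      by rewrite cx mulmxA WL mul1mx mxE.
    rewrite dotE s1 mul1r mxE unlift_none.
    rewrite cx addrC -addrA addNr addr0 //.
  by rewrite subrr; exists 0; rewrite mulmx0.
- move=> x.
  have hT : (forall i, (target_diag l.+1 (gcd_entries p) d i i %| f x i ord0)%Z) <->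
     [/\ (s^T *m x) 0 0 = 0, (gcd_entries p %| (W *m cut x) ord0 ord0)%Z &
         forall j, j != ord0 -> (d %| (W *m cut x) j ord0)%Z].
    split.
      move=> H; split.
      + by have := H ord0; rewrite fE unlift_none [target_diag _ _ _ _ _]mxE eqxx /= dvd0z => /eqP.
      + by have := H (lift ord0 ord0); rewrite fE liftK [target_diag _ _ _ _ _]mxE eqxx lift0.
      + move=> j jn0; have := H (lift ord0 j); rewrite fE liftK [target_diag _ _ _ _ _]mxE eqxx lift0 /= eqSS.
        have -> : (nat_of_ord j == 0%N) = false.
          by apply/negbTE; apply: contra jn0 => /eqP h; apply/eqP/ord_inj.
        by [].
    case=> sx Hg Hd i; rewrite fE [target_diag _ _ _ _ _]mxE eqxx.
    case: (unliftP ord0 i) => [j ->|->]; last by rewrite /= sx dvdz0.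
    rewrite lift0 /= eqSS.
    case: eqP => [j0|/eqP jn0].
      by have -> : j = ord0 by apply/ord_inj.
    apply: Hd; apply: contra jn0 => /eqP ->; by [].
  split.
    move/imT_char/hT => [sx Hg Hd]; apply/imL_char => //; split => //.
    apply/(K2 p s1 sx); apply/(K3 (cut x) d WL LW Dp'); apply/(K4 (W *m cut x) d v0E).
    by rewrite gE.
  case/(imL_char _ dn0) => sx H; apply/imT_char/hT.
  move: H => /(K2 p s1 sx) /(K3 (cut x) d WL LW Dp') /(K4 (W *m cut x) d v0E).
  by rewrite gE => -[].
Qed.
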